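(* Let $\mathcal{D}=\mathcal{P}_{\mathcal{D}}\cup\mathcal{L}_{\mathcal{D}}$ be a dominating set of the incidence graph of an arbitrary projective plane $\Pi_q$ of order $q$, and let $c$ be the maximum, over all points $P$, of $|[P]\cap\mathcal{L}_{\mathcal{D}}|$. Suppose that $|\mathcal{L}_{\mathcal{D}}|+2-q\leq c\leq q-1$. Then $|\mathcal{L}_{\mathcal{D}}|\geq 4q-2-|\mathcal{D}|$.
   Context: A dominating set $\mathcal{D}=\mathcal{P}_{\mathcal{D}}\cup\mathcal{L}_{\mathcal{D}}$ of the incidence graph of $\Pi_q$ is a set of points $\mathcal{P}_{\mathcal{D}}$ and lines $\mathcal{L}_{\mathcal{D}}$ such that every point not in $\mathcal{P}_{\mathcal{D}}$ lies on a line of $\mathcal{L}_{\mathcal{D}}$ and every line not in $\mathcal{L}_{\mathcal{D}}$ contains a point of $\mathcal{P}_{\mathcal{D}}$. $[P]$ is the set of lines through $P$. *)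

(* Defs.v *)
From mathcomp Require Import all_boot all_order all_algebra.
Set Implicit Arguments. Unset Strict Implicit. Unset Printing Implicit Defensive.

Definition projective_plane (Pt Ln : finType) (inc : Pt -> Ln -> bool) : Prop :=
  (forall P Q : Pt, P != Q -> #|[set l : Ln | inc P l && inc Q l]| = 1%N) /\
  (forall l m : Ln, l != m -> #|[set P : Pt | inc P l && inc P m]| = 1%N) /\
  (exists (A : 'I_4 -> Pt), injective A /\
     forall i j k : 'I_4, i != j -> j != k -> i != k ->
       ~ exists l : Ln, [&& inc (A i) l, inc (A j) l & inc (A k) l]).

Definition projective_plane_of_order (q : nat) (Pt Ln : finType)
  (inc : Pt -> Ln -> bool) : Prop :=
  projective_plane inc /\ forall l : Ln, #|[set P : Pt | inc P l]| = q.+1.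

Definition pencil (Pt Ln : finType) (inc : Pt -> Ln -> bool) (P : Pt) : {set Ln} :=
  [set l : Ln | inc P l].

Definition dominating_set (Pt Ln : finType) (inc : Pt -> Ln -> bool)
  (PD : {set Pt}) (LD : {set Ln}) : Prop :=
  (forall P : Pt, P \notin PD -> exists2 l, l \in LD & inc P l) /\
  (forall l : Ln, l \notin LD -> exists2 P, P \in PD & inc P l).

(* Main.v *)
Require Import Defs.
From mathcomp Require Import all_boot all_order all_algebra.
From mathcomp Require Import zify.
Import Order.TTheory GRing.Theory Num.Theory.

Section Aux.
Variables (Pt Ln : finType) (inc : Pt -> Ln -> bool).
Hypothesis H1 : forall P Q : Pt, P != Q -> #|[set l : Ln | inc P l && inc Q l]| = 1%N.
Hypothesis H2 : forall l m : Ln, l != m -> #|[set P : Pt | inc P l && inc P m]| = 1%N.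

Lemma line_uniq P Q l m : P != Q -> inc P l -> inc Q l -> inc P m -> inc Q m -> l = m.
Proof.
move=> nPQ Pl Ql Pm Qm.
have /cards1P [x Hx] : #|[set l : Ln | inc P l && inc Q l]| == 1%N by rewrite H1.
have : l \in [set l : Ln | inc P l && inc Q l] by rewrite inE Pl Ql.
have : m \in [set l : Ln | inc P l && inc Q l] by rewrite inE Pm Qm.
by rewrite Hx !inE => /eqP -> /eqP ->.
Qed.

Lemma point_uniq l m P Q : l != m -> inc P l -> inc P m -> inc Q l -> inc Q m -> P = Q.
Proof.
move=> nlm Pl Pm Ql Qm.
have /cards1P [x Hx] : #|[set P : Pt | inc P l && inc P m]| == 1%N by rewrite H2.
have : P \in [set P : Pt | inc P l && inc P m] by rewrite inE Pl Pm.
have : Q \in [set P : Pt | inc P l && inc P m] by rewrite inE Ql Qm.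
by rewrite Hx !inE => /eqP -> /eqP ->.
Qed.

Lemma line_ex P Q : P != Q -> exists l, inc P l && inc Q l.
Proof.
move=> nPQ.
have : [set l : Ln | inc P l && inc Q l] != set0.
  by rewrite -card_gt0 H1.
by case/set0Pn => l; rewrite inE => H; exists l.
Qed.
End Aux.
Arguments line_uniq {Pt Ln inc} H1 {P Q l m}.
Arguments point_uniq {Pt Ln inc} H2 {l m P Q}.
Arguments line_ex {Pt Ln inc} H1 {P Q}.

Local Open Scope ring_scope.

Theorem lemma4 (q : nat) (Pt Ln : finType) (inc : Pt -> Ln -> bool)
  (PD : {set Pt}) (LD : {set Ln}) :
  projective_plane_of_order q inc ->
  dominating_set inc PD LD ->
  let c : nat := (\max_(P : Pt) #|pencil inc P :&: LD|)%N in
  (#|LD|%:Z + 2 - q%:Z <= c%:Z) -> (c%:Z <= q%:Z - 1) ->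
  #|LD|%:Z >= 4 * q%:Z - 2 - (#|PD|%:Z + #|LD|%:Z).
Proof.
move=> [[H1 [H2 [A [Ainj Anc]]]] Hq] [DP DL] c Hc1 Hc2.
have Pt0 : (0 < #|Pt|)%N by apply/card_gt0P; exists (A ord0).
have [P cP] := @bigop.eq_bigmax _ (fun P => #|pencil inc P :&: LD|) Pt0.
rewrite -/c in cP.
have [l0 nl0] : exists l0, ~~ inc P l0.
  case: (boolP [exists l, ~~ inc P l]) => [/existsP//|/existsPn Hall].
  have allP : forall l, inc P l by move=> l; have := Hall l; rewrite negbK.
  exfalso.
  pose a0 : 'I_4 := @Ordinal 4 0 isT.
  pose a1 : 'I_4 := @Ordinal 4 1 isT.
  pose a2 : 'I_4 := @Ordinal 4 2 isT.
  pose a3 : 'I_4 := @Ordinal 4 3 isT.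
  have Ad : forall i j : 'I_4, i != j -> A i != A j.
    by move=> i j nij; apply: contra nij => /eqP /Ainj ->.
  have [l01 /andP[l01a l01b]] := line_ex H1 (Ad a0 a1 isT).
  have [l02 /andP[l02a l02b]] := line_ex H1 (Ad a0 a2 isT).
  have [l12 /andP[l12a l12b]] := line_ex H1 (Ad a1 a2 isT).
  have [l13 /andP[l13a l13b]] := line_ex H1 (Ad a1 a3 isT).
  case: (eqVneq (A a0) P) => [E|nE].
  - have nE1 : A a1 != P by rewrite -E eq_sym; apply: Ad.
    have e := line_uniq H1 nE1 l12a (allP l12) l13a (allP l13).
    apply: (Anc a1 a2 a3 isT isT isT); exists l12.
    by rewrite l12a l12b e l13b.
  - have e := line_uniq H1 nE l01a (allP l01) l02a (allP l02).
    apply: (Anc a0 a1 a2 isT isT isT); exists l01.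
    by rewrite l01a l01b e l02b.
have pen : (q.+1 <= #|pencil inc P|)%N.
  rewrite -(Hq l0).
  pose f l := odflt P [pick Q | inc Q l && inc Q l0].
  apply: (leq_trans _ (leq_imset_card f _)).
  apply: subset_leq_card; apply/subsetP => Q; rewrite inE => Ql0.
  have nPQ : P != Q by apply: contraNneq nl0 => ->.
  have [l /andP[Pl Ql]] := line_ex H1 nPQ.
  apply/imsetP; exists l; first by rewrite inE.
  rewrite /f; case: pickP => [Q' /andP[Q'l Q'l0]|/(_ Q)]; last by rewrite Ql Ql0.
  have nll0 : l != l0 by apply: contraNneq nl0 => <-.
  by rewrite /= (point_uniq H2 nll0 Ql Ql0 Q'l Q'l0).
pose S := pencil inc P :\: LD.
have Sc : (#|pencil inc P| = c + #|S|)%N by rewrite cP cardsID.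
pose b := (q - (#|LD| - c))%N.
pose B l := [set Q in PD | inc Q l && (Q != P)].
have Bb : forall l, l \in S -> (b <= #|B l|)%N.
  move=> l; rewrite !inE => /andP[lLD Pl].
  pose C := [set Q | inc Q l && (Q != P)].
  have Cq : #|C| = q.
    have : #|[set Q | inc Q l]| = (#|C| + 1)%N.
      rewrite (cardsD1 P) inE Pl addnC; congr (_ + _)%N.
      by apply: eq_card => Q; rewrite !inE andbC.
    by rewrite Hq => /eqP; rewrite addn1 eqSS => /eqP.
  have CB : (#|C| <= #|B l| + #|C :\: PD|)%N.
    rewrite -(cardsID PD C); rewrite leq_add2r; apply: subset_leq_card.
    by apply/subsetP => Q; rewrite !inE => /andP[-> ->].
  pose g Q := odflt l [pick k in LD | inc Q k].
  have gP : forall Q, Q \in C :\: PD -> [/\ g Q \in LD, inc Q (g Q) & ~~ inc P (g Q)].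
    move=> Q; rewrite !inE => /andP[QPD /andP[Ql nQP]].
    have [k kLD Qk] := DP Q QPD.
    rewrite /g; case: pickP => [k' /andP[k'LD Qk']|/(_ k)]; last by rewrite kLD Qk.
    split => //=; apply/negP => Pk'.
    have := line_uniq H1 nQP Ql Pl Qk' Pk'.
    by move=> e; move: lLD; rewrite e k'LD.
  have ginj : {in C :\: PD &, injective g}.
    move=> Q1 Q2 HQ1 HQ2 e.
    have [g1 Qg1 _] := gP _ HQ1; have [g2 Qg2 _] := gP _ HQ2.
    move: HQ1 HQ2; rewrite !inE => /andP[_ /andP[Q1l _]] /andP[_ /andP[Q2l _]].
    have nl : g Q1 != l by apply: contraTneq g1 => ->.
    by apply: (point_uniq H2 nl Qg1 Q1l); rewrite ?e // -e in Qg2.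
  have CD : (#|C :\: PD| <= #|LD| - c)%N.
    rewrite -(card_in_imset ginj) cP -(cardsID (pencil inc P) LD) setIC addKn.
    apply: subset_leq_card; apply/subsetP => k /imsetP [Q HQ ->].
    by have [? ? ?] := gP _ HQ; rewrite !inE; apply/andP.
  rewrite /b; lia.
have sumB : (\sum_(l in S) #|B l| <= #|PD|)%N.
  have -> : (\sum_(l in S) #|B l| = \sum_(l in S) \sum_(Q in PD) (Q \in B l : nat))%N.
    apply: eq_bigr => l _.
    rewrite -sum1_card (eq_bigl (fun Q => (Q \in PD) && (Q \in B l))); last first.
      by move=> Q; rewrite !inE; case: (Q \in PD).
    by rewrite big_mkcondr; apply: eq_bigr => Q _; case: (Q \in B l).
  rewrite exchange_big /= -sum1_card; apply: leq_sum => Q QPD.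
  rewrite (_ : (\sum_(i in S) (Q \in B i : nat) = #|[set i in S | Q \in B i]|)%N); last first.
    rewrite -sum1_card; symmetry.
    rewrite (eq_bigl (fun i => (i \in S) && (Q \in B i))); last first.
      by move=> i; rewrite inE.
    by rewrite big_mkcondr; apply: eq_bigr => i _; case: (Q \in B i).
  apply/card_le1_eqP => l1 l2; rewrite !inE.
  move=> /andP[/andP[_ P1] /andP[_ /andP[Q1 nQP]]] /andP[/andP[_ P2] /andP[_ /andP[Q2 _]]].
  exact: (line_uniq H1 nQP Q2 P2 Q1 P1).
have sumS : (#|S| * b <= #|PD|)%N.
  apply: leq_trans sumB; rewrite -sum_nat_const; exact: leq_sum.
have cL : (c <= #|LD|)%N by rewrite cP; apply: subset_leq_card; apply: subsetIr.
have prod : ((q.+1 - c) * b <= #|S| * b)%N.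
  by rewrite leq_mul2r; apply/orP; right; lia.
move: Hc1 Hc2; rewrite /b in prod sumS.
nia.
Qed.
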